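(* Let $H$ and $K$ be finite groups with $\mathrm{MaxDim}(K) = i(K)$. Then $\mathrm{MaxDim}(H \times K) = \mathrm{MaxDim}(H) + \mathrm{MaxDim}(K)$.
   Context: All groups are finite. A subset $s$ of a group is irredundant if $\langle s \setminus \{h\}\rangle \neq \langle s \rangle$ for every $h \in s$; $i(G)$ is the maximal size of an irredundant subset of $G$. A finite set $\{H_1,\dots,H_n\}$ of subgroups of a group $G$ is in general position if for every $1 \le j \le n$, $\bigcap_{i \neq j} H_i \supsetneq \bigcap_{i} H_i$. $\mathrm{MaxDim}(G)$ is the largest cardinality of a collection of maximal subgroups of $G$ that is in general position. *)

(* Defs.v *)
From mathcomp Require Import all_boot all_fingroup all_solvable.
Set Implicit Arguments. Unset Strict Implicit. Unset Printing Implicit Defensive.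
Local Open Scope group_scope.

Definition irredundant (gT : finGroupType) (s : {set gT}) : bool :=
  [forall h in s, <<s :\ h>> != <<s>>].

Definition irr_num (gT : finGroupType) : nat :=
  \max_(s : {set gT} | irredundant s) #|s|.

Definition gen_position (gT : finGroupType) (P : {set {set gT}}) : bool :=
  [forall M in P, (\bigcap_(N in P) N) \proper (\bigcap_(N in P | N != M) N)].

Definition MaxDim (gT : finGroupType) : nat :=
  \max_(P : {set {set gT}} |
          [forall M in P, maximal M [set: gT]] && gen_position P) #|P|.

(* Main.v *)
Require Import Defs.
From mathcomp Require Import all_boot all_fingroup all_solvable.
Set Implicit Arguments. Unset Strict Implicit. Unset Printing Implicit Defensive.
Local Open Scope group_scope.

Lemma maximal_group (gT : finGroupType) (M A : {set gT}) : maximal M A -> group_set M.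
Proof. by rewrite /maximal /maxgroup => /maxsetP [/andP []]. Qed.

Lemma gen_positionP (gT : finGroupType) (P : {set {set gT}}) :
  reflect (forall M, M \in P -> exists2 x, x \in \bigcap_(N in P | N != M) N & x \notin M)
          (gen_position P).
Proof.
apply: (iffP forall_inP) => H M MP;
  have E : \bigcap_(N in P) N = M :&: \bigcap_(N in P | N != M) N by rewrite (bigD1 M).
  have := H M MP; rewrite E => /properP [_ [x xin xnot]]; exists x => //.
  by apply: contra xnot => xM; rewrite inE xM xin.
case: (H M MP) => x xin xnot; rewrite E; apply/properP; split; first exact: subsetIr.
by exists x => //; rewrite inE (negbTE xnot).
Qed.

Lemma MaxDim_ge (gT : finGroupType) (P : {set {set gT}}) :
  (forall M, M \in P -> maximal M [set: gT]) -> gen_position P -> #|P| <= MaxDim gT.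
Proof.
move=> mP gP.
have h : [forall M in P, maximal M [set: gT]] && gen_position P.
  by rewrite gP andbT; apply/forall_inP.
exact: (leq_bigmax_cond (F := fun P : {set {set gT}} => #|P|) P h).
Qed.

Lemma MaxDim_le (gT : finGroupType) m :
  (forall P : {set {set gT}}, (forall M, M \in P -> maximal M [set: gT]) -> gen_position P -> #|P| <= m) -> MaxDim gT <= m.
Proof.
move=> H; apply/bigmax_leqP => P /andP [/forall_inP mP gP]; exact: H.
Qed.

Lemma MaxDim_witness (gT : finGroupType) : exists2 P : {set {set gT}},
  [forall M in P, maximal M [set: gT]] && gen_position P & #|P| = MaxDim gT.
Proof.
pose A := [pred P : {set {set gT}} | [forall M in P, maximal M [set: gT]] && gen_position P].
have [|P Pin E] := @eq_bigmax_cond _ A (fun P => #|P|).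
  apply/card_gt0P; exists set0; rewrite inE /=.
  by apply/andP; split; apply/forall_inP => M; rewrite inE.
by exists P => //; rewrite E.
Qed.

Lemma irr_ge (gT : finGroupType) (s : {set gT}) : irredundant s -> #|s| <= irr_num gT.
Proof. by move=> h; exact: (leq_bigmax_cond (F := fun s : {set gT} => #|s|) s h). Qed.

Lemma maximal_proper (gT : finGroupType) (M A : {set gT}) : maximal M A -> M \proper A.
Proof. by rewrite /maximal /maxgroup => /maxsetP [/andP [gM]]; rewrite /= (gen_set_id gM). Qed.

Lemma maximal_one (gT : finGroupType) (M A : {set gT}) : maximal M A -> 1 \in M.
Proof. by move=> /maximal_group gM; exact: (group1 (Group gM)). Qed.

Lemma group_set_bigcap (gT : finGroupType) (Q : {set {set gT}}) :
  (forall Y, Y \in Q -> group_set Y) -> group_set (\bigcap_(Y in Q) Y).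
Proof.
move=> gQ; apply/group_setP; split.
  by apply/bigcapP => Y /gQ gY; exact: (group1 (Group gY)).
move=> x y /bigcapP xQ /bigcapP yQ; apply/bigcapP => Y YQ.
have gY := gQ Y YQ; exact: (@groupM _ (Group gY) x y (xQ Y YQ) (yQ Y YQ)).
Qed.

Lemma max_mul (gT : finGroupType) (M E : {group gT}) :
  maximal M [set: gT] -> [set: gT] \subset 'N(E) -> ~~ (E \subset M) -> M * E = [set: gT].
Proof.
move=> /maxgroupP [pM maxM] nE EM.
rewrite -norm_joinEl ?(subset_trans (subsetT _) nE) //.
apply/eqP; rewrite eqEsubset subsetT /=.
apply: contraR EM => nsub.
have pJ : (M <*> E)%G \proper [set: gT] by rewrite properE subsetT nsub.
have eq := maxM (M <*> E)%G pJ (joing_subl _ _).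
by rewrite -eq joing_subr.
Qed.

Lemma group_setI2 (gT : finGroupType) (A B : {set gT}) :
  group_set A -> group_set B -> group_set (A :&: B).
Proof. by move=> gA gB; exact: (valP (setI_group (Group gA) (Group gB))). Qed.

Section Prod.
Variables H K : finGroupType.
Local Notation G := (H * K)%type.

Lemma pairM (a c : H) (b d : K) : ((a, b) * (c, d) : G) = (a * c, b * d).
Proof. by []. Qed.
Lemma pairV (a : H) (b : K) : ((a, b)^-1 : G) = (a^-1, b^-1).
Proof. by []. Qed.
Lemma pair1 : (1 : G) = (1, 1).
Proof. by []. Qed.
Lemma pairJ (a c : H) (b d : K) : ((a, b) ^ (c, d) : G) = (a ^ c, b ^ d).
Proof. by []. Qed.
Lemma in_pre1 (L : {set G}) (x : H) : (x \in (@pairg1 H K) @*^-1 L) = ((x, 1) \in L).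
Proof. by rewrite !inE. Qed.
Lemma in_pre2 (L : {set G}) (x : K) : (x \in (@pair1g H K) @*^-1 L) = ((1, x) \in L).
Proof. by rewrite !inE. Qed.

Lemma maximal_setX1 (Y : {set H}) :
  maximal Y [set: H] -> maximal (setX Y [set: K]) [set: G].
Proof.
move=> mY; have gY := maximal_group mY; pose Yg := Group gY.
have /maxgroupP [pY maxY] : maximal Yg [set: H] by [].
have -> : setX Y [set: K] = setX_group Yg [set: K]%G by [].
apply/maxgroupP; split.
  have [_ [y _ yY]] := properP pY.
  apply/properP; split; first exact: subsetT.
  by exists (y, 1); rewrite ?inE // negb_and yY.
move=> L pL sYL.
pose Z := (@pairg1 H K) @*^-1 L.
have NL : forall k : K, ((1 : H), k) \in L.
  by move=> k; apply: (subsetP sYL); rewrite !inE group1.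
have sYZ : Yg \subset Z.
  by apply/subsetP => y yY; rewrite in_pre1; apply: (subsetP sYL); rewrite !inE yY.
have pZ : Z \proper [set: H].
  apply/properP; split; first exact: subsetT.
  have [_ [[a b] _ abL]] := properP pL.
  exists a => //; rewrite in_pre1; apply: contra abL => a1L.
  have -> : ((a, b) : G) = (a, 1) * (1, b) by rewrite pairM mulg1 mul1g.
  by rewrite groupM // NL.
have eZ : Z :=: Yg := maxY [group of Z] pZ sYZ.
apply/eqP; rewrite eqEsubset sYL andbT; apply/subsetP => -[a b] abL.
rewrite !inE andbT /=.
have : a \in Z.
  rewrite in_pre1.
  have -> : ((a, 1) : G) = (a, b) * (1, b^-1) by rewrite pairM mulg1 mulgV.
  by rewrite groupM // NL.
by rewrite eZ.
Qed.

Lemma maximal_setX2 (Y : {set K}) :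
  maximal Y [set: K] -> maximal (setX [set: H] Y) [set: G].
Proof.
move=> mY; have gY := maximal_group mY; pose Yg := Group gY.
have /maxgroupP [pY maxY] : maximal Yg [set: K] by [].
have -> : setX [set: H] Y = setX_group [set: H]%G Yg by [].
apply/maxgroupP; split.
  have [_ [y _ yY]] := properP pY.
  apply/properP; split; first exact: subsetT.
  by exists (1, y); rewrite ?inE // yY.
move=> L pL sYL.
pose Z := (@pair1g H K) @*^-1 L.
have NL : forall k : H, (k, (1 : K)) \in L.
  by move=> k; apply: (subsetP sYL); rewrite !inE group1.
have sYZ : Yg \subset Z.
  by apply/subsetP => y yY; rewrite in_pre2; apply: (subsetP sYL); rewrite !inE yY.
have pZ : Z \proper [set: K].
  apply/properP; split; first exact: subsetT.
  have [_ [[a b] _ abL]] := properP pL.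
  exists b => //; rewrite in_pre2; apply: contra abL => a1L.
  have -> : ((a, b) : G) = (a, 1) * (1, b) by rewrite pairM mulg1 mul1g.
  by rewrite groupM // NL.
have eZ : Z :=: Yg := maxY [group of Z] pZ sYZ.
apply/eqP; rewrite eqEsubset sYL andbT; apply/subsetP => -[a b] abL.
rewrite !inE /=.
have : b \in Z.
  rewrite in_pre2.
  have -> : ((1, b) : G) = (a^-1, 1) * (a, b) by rewrite pairM mulVg mul1g.
  by rewrite groupM // NL.
by rewrite eZ.
Qed.


Lemma MaxDim_prod_ge : MaxDim H + MaxDim K <= MaxDim G.
Proof.
have [PH /andP[/forall_inP mH /gen_positionP gH] <-] := MaxDim_witness H.
have [PK /andP[/forall_inP mK /gen_positionP gK] <-] := MaxDim_witness K.
pose f1 := fun Y : {set H} => setX Y [set: K].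
pose f2 := fun Z : {set K} => setX [set: H] Z.
have inj1 : injective f1.
  move=> Y Y' E; apply/setP => y.
  by have := congr1 (fun S : {set G} => (y, 1) \in S) E; rewrite /f1 !inE !andbT.
have inj2 : injective f2.
  move=> Y Y' E; apply/setP => y.
  by have := congr1 (fun S : {set G} => (1, y) \in S) E; rewrite /f2 !inE.
have one2 : forall Z, Z \in PK -> (1 : K) \in Z by move=> Z /mK /maximal_one.
have one1 : forall Y, Y \in PH -> (1 : H) \in Y by move=> Y /mH /maximal_one.
have /eqP I0 : f1 @: PH :&: f2 @: PK == set0.
  apply/eqP/setP => W; rewrite !inE; apply/negP => /andP [/imsetP [Y YP ->] /imsetP [Z ZP E]].
  have [_ [y _ yY]] := properP (maximal_proper (mH Y YP)).
  have := congr1 (fun S : {set G} => (y, 1) \in S) E.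
  by rewrite /f1 /f2 !inE (negbTE yY) one2.
have -> : #|PH| + #|PK| = #|f1 @: PH :|: f2 @: PK|.
  by rewrite cardsU I0 cards0 subn0 !card_imset.
apply: MaxDim_ge.
  move=> W /setUP [] /imsetP [Y YP ->].
    exact: maximal_setX1 (mH Y YP).
  exact: maximal_setX2 (mK Y YP).
apply/gen_positionP => W /setUP [] /imsetP [Y YP ->].
  have [y yin yY] := gH Y YP; exists (y, 1); last by rewrite /f1 !inE andbT.
  apply/bigcapP => N /andP [] /setUP [] /imsetP [Y' Y'P ->] NW.
    rewrite /f1 !inE andbT; apply: (bigcapP yin); rewrite Y'P /=.
    by apply: contra NW => /eqP ->.
  by rewrite /f2 !inE one2.
have [y yin yY] := gK Y YP; exists (1, y); last by rewrite /f2 !inE.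
apply/bigcapP => N /andP [] /setUP [] /imsetP [Y' Y'P ->] NW.
  by rewrite /f1 !inE one1.
rewrite /f2 !inE; apply: (bigcapP yin); rewrite Y'P /=.
by apply: contra NW => /eqP ->.
Qed.


Lemma key_lemma (M : {set G}) (h : H) :
  maximal M [set: G] -> (h, 1) \notin M ->
  exists2 Y : {set H}, maximal Y [set: H] & ((@pairg1 H K) @*^-1 M \subset Y) && (h \notin Y).
Proof.
move=> mM hM.
have gM := maximal_group mM; pose Mg := Group gM.
have mMg : maximal Mg [set: G] by [].
have /maxgroupP [pM maxM] := mMg.
pose X := (@pairg1 H K) @*^-1 Mg.
have hX : h \notin X by rewrite in_pre1.
have pX : X \proper [set: H] by apply/properP; split; [exact: subsetT | exists h].
case: (boolP [forall k : K, ((1 : H), k) \in M]) => [/forallP NM | /forallPn [k0 k0M]].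
  exists X; last by rewrite subxx hX.
  apply/maxgroupP; split => // L pL sXL.
  pose GL := setX_group L [set: K]%G.
  have sMGL : Mg \subset GL.
    apply/subsetP => -[a b] abM; rewrite !inE andbT.
    apply: (subsetP sXL); rewrite in_pre1.
    have -> : ((a, 1) : G) = (a, b) * (1, b^-1) by rewrite pairM mulg1 mulgV.
    by rewrite groupM //; exact: NM.
  have pGL : GL \proper [set: G].
    have [_ [l _ lL]] := properP pL.
    apply/properP; split; first exact: subsetT.
    by exists (l, 1); rewrite ?inE // andbT.
  have eGL : GL :=: Mg := maxM GL pGL sMGL.
  apply/eqP; rewrite eqEsubset sXL andbT; apply/subsetP => l lL.
  by rewrite in_pre1 -eGL !inE lL.
pose N := setX_group (1%G : {group H}) [set: K]%G.
have nN : [set: G] \subset 'N(N).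
  apply/subsetP => -[c d] _; rewrite inE; apply/subsetP => x /imsetP [[a b] ab ->].
  move: ab; rewrite !inE /= => /andP [/eqP -> _].
  by rewrite mul1g mulVg eqxx.
have NM : ~~ (N \subset Mg).
  by apply/negP => /subsetP sub; move: k0M; rewrite sub // !inE eqxx.
have MN := max_mul mMg nN NM.
have surj : forall g : H, exists k : K, (g, k) \in M.
  move=> g; have : ((g, 1) : G) \in Mg * N by rewrite MN inE.
  case/mulsgP => -[m1 m2] [n1 n2] mM' nN' E.
  move: nN'; rewrite !inE /= => /andP [/eqP En1 _].
  exists m2; suff -> : g = m1 by [].
  by move: E; rewrite pairM En1 mulg1 => -[].
have nX : forall (g x : H), x \in X -> x ^ g \in X.
  move=> g x; rewrite !in_pre1 => xM; have [k gk] := surj g.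
  have := @groupJ _ Mg _ _ xM gk; by rewrite pairJ conj1g.
case: (pickP (fun Y : {set H} => maximal Y [set: H] && (X \subset Y) && (h \notin Y))) => [Y /andP [/andP [mY XY] hY] | noY].
  by exists Y => //; rewrite XY hY.
pose Om := [set Y : {set H} | maximal Y [set: H] && (X \subset Y)].
pose J := \bigcap_(Y in Om) Y.
have gJ : group_set J.
  by apply: group_set_bigcap => Y; rewrite inE => /andP [/maximal_group].
pose Jg := Group gJ.
have hJ : h \in J.
  apply/bigcapP => Y; rewrite inE => /andP [mY XY].
  by have := noY Y; rewrite mY XY /= => /negbFE.
have XJ : X \subset J.
  by apply/subsetP => x xX; apply/bigcapP => Y; rewrite inE => /andP [_ /subsetP]; apply.
have JJ : forall (g x : H), x \in J -> x ^ g \in J.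
  move=> g x /bigcapP xJ; apply/bigcapP => Y; rewrite inE => /andP [mY XY].
  have gY := maximal_group mY; pose Yg := Group gY.
  have : Y :^ g^-1 \in Om.
    rewrite inE; apply/andP; split.
      have := maximalJ Yg [set: H]%G g^-1.
      by rewrite (conjGid (in_setT (g^-1))) => ->.
    apply/subsetP => z zX; rewrite mem_conjg invgK.
    by apply: (subsetP XY); exact: nX.
  by move/xJ; rewrite mem_conjg invgK.
pose E := setX_group Jg (1%G : {group K}).
have nE : [set: G] \subset 'N(E).
  apply/subsetP => -[c d] _; rewrite inE; apply/subsetP => x /imsetP [[a b] ab ->].
  move: ab; rewrite !inE /= => /andP [aJ /eqP ->].
  by rewrite mul1g mulVg eqxx andbT; exact: (JJ c a aJ).
have EM : ~~ (E \subset Mg).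
  by apply/negP => /subsetP sub; move: hM; rewrite sub // !inE hJ eqxx.
have ME := max_mul mMg nE EM.
have JT : forall g : H, g \in J.
  move=> g; have : ((g, 1) : G) \in Mg * E by rewrite ME inE.
  case/mulsgP => -[m1 m2] [e1 e2] mM' eE' Eq.
  move: eE'; rewrite !inE /= => /andP [e1J /eqP Ee2].
  move: Eq; rewrite pairM Ee2 mulg1 => -[Eg E1].
  have m1X : m1 \in X by rewrite in_pre1; move: mM'; rewrite -E1.
  by rewrite Eg; exact: (@groupM _ Jg _ _ (subsetP XJ _ m1X) e1J).
have [eX | [Y0 mY0 XY0]] := maximal_exists (subsetT X).
  by move: pX; rewrite /X eX properxx.
have : (Y0 : {set H}) \in Om by rewrite inE mY0 XY0.
move=> Y0Om; have [_ [y _ yY0]] := properP (maximal_proper mY0).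
by move: yY0; rewrite (bigcapP (JT y) _ Y0Om).
Qed.


Lemma MaxDim_prod_le : MaxDim G <= MaxDim H + irr_num K.
Proof.
apply: MaxDim_le => P mP /gen_positionP gP.
have gPs : forall N, N \in P -> group_set N by move=> N /mP /maximal_group.
pose C : {set G} := setX [set: H] 1.
pose cap (Q : {set {set G}}) := \bigcap_(N in Q) N.
pose pr := fun T : {set {set G}} => (T \subset P) && (C :&: cap T == C :&: cap P).
have prP : pr P by rewrite /pr subxx eqxx.
have [T /minsetP [/andP [TP /eqP CT] minT] _] := @minset_exists _ pr P prP.
have cardP : #|P| = #|T| + #|P :\: T| by rewrite -(cardsID T P) (setIidPr TP).
have gcap : forall Q : {set {set G}}, Q \subset P -> group_set (cap Q).
  by move=> Q QP; apply: group_set_bigcap => N /(subsetP QP) /gPs.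
have Sside : #|P :\: T| <= irr_num K.
  pose gw := fun j : {set G} => odflt 1 [pick g | (g \in \bigcap_(N in P | N != j) N) && (g \notin j)].
  have gwS : forall j, j \in P -> (gw j \in \bigcap_(N in P | N != j) N) && (gw j \notin j).
    move=> j jP; rewrite /gw; case: pickP => [g // | none].
    by have [g g1 g2] := gP j jP; move: (none g); rewrite /= g1 g2.
  pose u := fun j : {set G} => (gw j).2.
  have gT : group_set (cap T) := gcap T TP.
  pose A := fun j : {set G} => j :&: cap T.
  have gA : forall j, j \in P -> group_set (A j).
    by move=> j jP; apply: group_setI2 (gPs j jP) gT.
  have capT : forall j, j \in P :\: T -> gw j \in cap T.
    move=> j; rewrite inE => /andP [jT jP]; apply/bigcapP => N NT.
    have /andP [/bigcapP g1 _] := gwS j jP; apply: g1; rewrite (subsetP TP _ NT) /=.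
    by apply: contraNneq jT => <-.
  have inL : forall i j, i \in P :\: T -> j \in P -> i != j -> gw i \in A j.
    move=> i j iPT jP ij; rewrite inE capT // andbT.
    have /andP [/bigcapP g1 _] := gwS i (subsetP (subsetDl P T) _ iPT); apply: g1.
    by rewrite jP eq_sym.
  have notL : forall j (m : G), j \in P :\: T -> m \in A j -> m.2 != u j.
    move=> j m jPT; have jP := subsetP (subsetDl P T) _ jPT.
    rewrite inE => /andP [mj mT]; apply/negP => /eqP E.
    pose c := m^-1 * gw j.
    have cC : c \in C by rewrite !inE /= E /u mulVg eqxx.
    have cT : c \in cap T.
      by rewrite (@groupM _ (Group gT)) ?(@groupV _ (Group gT)) ?capT.
    have : c \in C :&: cap P by rewrite -CT inE cC cT.
    rewrite inE => /andP [_ /bigcapP cj]; have cjj := cj j jP.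
    have := gwS j jP; rewrite andbC => /andP [gj _].
    move: gj; have -> : gw j = m * c by rewrite /c mulKVg.
    by rewrite (@groupM _ (Group (gPs j jP))).
  pose s := u @: (P :\: T).
  have inj : {in P :\: T &, injective u}.
    move=> i j iPT jPT E; apply/eqP; apply/negPn/negP => ij.
    have jP := subsetP (subsetDl P T) _ jPT.
    by have := notL j (gw i) jPT (inL i j iPT jP ij); rewrite -/(u i) E eqxx.
  rewrite -(card_in_imset inj); apply: irr_ge.
  apply/forall_inP => x /imsetP [j jPT ->].
  have jP := subsetP (subsetDl P T) _ jPT.
  pose Lj := (@snd H K) @* (Group (gA j jP)).
  have sub : s :\ u j \subset Lj.
    apply/subsetP => y; rewrite !inE => /andP [yne /imsetP [i iPT Ey]].
    have ij : i != j by apply: contraNneq yne => ij; rewrite Ey ij.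
    rewrite Ey; exact: (@mem_morphim _ _ _ (snd_morphism H K) _ _ (in_setT _) (inL i j iPT jP ij)).
  have notin : u j \notin Lj.
    apply/negP; case/morphimP => m _ mA E.
    by have := notL j m jPT mA; rewrite E eqxx.
  apply/negP => /eqP E'.
  have : u j \in <<s>> by apply: mem_gen; apply/imsetP; exists j.
  have sub' : <<s :\ u j>> \subset Lj by rewrite gen_subG.
  by rewrite -E' => /(subsetP sub'); rewrite (negbTE notin).
have Tside : #|T| <= MaxDim H.
  pose pre := fun M : {set G} => (@pairg1 H K) @*^-1 M.
  pose cond := fun (t : {set G}) (Y : {set H}) =>
    maximal Y [set: H] && (pre t \subset Y) && ~~ (pre (cap (T :\ t)) \subset Y).
  pose Yf := fun t => odflt [set: H] [pick Y | cond t Y].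
  have Yex : forall t, t \in T -> exists Y, cond t Y.
    move=> t tT.
    have neq : C :&: cap (T :\ t) != C :&: cap P.
      apply/negP => /eqP E.
      have prT : pr (T :\ t) by rewrite /pr (subset_trans (subD1set T t) TP) E eqxx.
      have := congr1 (fun S : {set {set G}} => t \in S) (minT _ prT (subD1set T t)).
      by rewrite !inE eqxx tT.
    have sub : C :&: cap P \subset C :&: cap (T :\ t).
      apply: setIS; apply/subsetP => x /bigcapP xP; apply/bigcapP => N /setD1P [_ NT].
      exact: xP (subsetP TP _ NT).
    have [c cin cnot] : exists2 c, c \in C :&: cap (T :\ t) & c \notin C :&: cap P.
      by apply/subsetPn; apply: contra neq => sub2; rewrite eqEsubset sub2 sub.
    have ct : c \notin t.
      apply: contra cnot => ct; rewrite -CT; move: cin; rewrite inE => /andP [cC /bigcapP cT'].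
      rewrite inE cC /=; apply/bigcapP => N NT; case: (eqVneq N t) => [-> // | Nt].
      by apply: cT'; rewrite !inE Nt NT.
    move: cin ct; case: c cnot => h k _; rewrite inE => /andP [kC cT'] ct.
    move: kC; rewrite !inE /= => /eqP k1.
    rewrite k1 in ct cT'.
    have [Y mY /andP [tY hY]] := key_lemma (mP t (subsetP TP _ tT)) ct.
    exists Y; rewrite /cond mY tY /=; apply/subsetPn; exists h => //.
    by rewrite /pre in_pre1.
  have YS : forall t, t \in T -> cond t (Yf t).
    move=> t tT; rewrite /Yf; case: pickP => [Y // | none].
    by have [Y cY] := Yex t tT; move: (none Y); rewrite cY.
  have preT : forall t t', t' \in T -> t' != t -> pre (cap (T :\ t)) \subset pre t'.
    move=> t t' t'T ne; apply/subsetP => x; rewrite /pre !in_pre1 => /bigcapP; apply.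
    by rewrite !inE ne t'T.
  have inj : {in T &, injective Yf}.
    move=> t t' tT t'T E; apply/eqP; apply/negPn/negP => ne.
    have := YS t tT; rewrite /cond => /andP [_ nsub]; apply/negP: nsub.
    have /andP [/andP [_ sub] _] := YS t' t'T.
    have ne2 : t' != t by rewrite eq_sym.
    by rewrite E negbK; exact: (subset_trans (preT t t' t'T ne2) sub).
  rewrite -(card_in_imset inj); apply: MaxDim_ge.
    by move=> Y /imsetP [t tT ->]; have /andP [/andP []] := YS t tT.
  apply/gen_positionP => Y /imsetP [t tT ->].
  have /andP [_ /subsetPn [x xin xnot]] := YS t tT.
  exists x => //; apply/bigcapP => N /andP [/imsetP [t' t'T ->] ne].
  have ne' : t' != t by apply: contraNneq ne => ->.
  have /andP [/andP [_ sub] _] := YS t' t'T; apply: (subsetP sub).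
  exact: (subsetP (preT t t' t'T ne')).
by rewrite cardP leq_add.
Qed.

End Prod.

Theorem proposition2p6 (H K : finGroupType) :
  MaxDim K = irr_num K ->
  MaxDim (H * K)%type = MaxDim H + MaxDim K.
Proof.
move=> hK; apply/eqP; rewrite eqn_leq (MaxDim_prod_ge H K) andbT.
by rewrite hK; exact: MaxDim_prod_le.
Qed.
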